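(* For every hypergraph $\mathcal{C}$ we have $\operatorname{conn_h}(\operatorname{Ind}(\mathcal{C}))\ge \psi(\mathcal{C})-2$.
   Context: A hypergraph $\mathcal{C}$ on a finite vertex set $V$ is a family of pairwise incomparable subsets of $V$ (its edges), each of cardinality at least $2$; vertices lying in no edge are allowed. The independence complex $\operatorname{Ind}(\mathcal{C})$ is the simplicial complex on $V$ whose faces are the subsets of $V$ containing no edge of $\mathcal{C}$ (if $V=\emptyset$ it is $\{\emptyset\}$). For an edge $F$: $\mathcal{C}-F$ is the hypergraph on $V$ with edge set $\mathcal{C}\setminus\{F\}$; $N_{\mathcal{C}}(F)=\bigcup\{E\setminus F : E\in\mathcal{C},\ |E\setminus F|=1\}$; and $\mathcal{C}:F$ is the hypergraph on $V\setminus(F\cup N_{\mathcal{C}}(F))$ whose edges are the members of cardinality at least $2$ among the inclusion-minimal members of the family $\{E\setminus F : E\in \mathcal{C}-F\}$. The number $\psi(\mathcal{C})\in\mathbb{Z}_{\ge 0}\cup\{\infty\}$ is defined recursively: $\psi(\mathcal{C})=0$ if $V=\emptyset$; $\psi(\mathcal{C})=\infty$ if $V\neq\emptyset$ and $\mathcal{C}$ has no edges; otherwise $\psi(\mathcal{C})=\max_{F\in\mathcal{C}}\min\{\psi(\mathcal{C}-F),\ \psi(\mathcal{C}:F)+|F|-1\}$. The homological connectivity $\operatorname{conn_h}(\Delta)$ is the largest integer $k$ such that $\tilde H_i(\Delta;\mathbb{Z})=0$ for all $i\le k$ ($\infty$ if all vanish; in particular $\operatorname{conn_h}(\{\emptyset\})=-2$).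 *)

(* Defs.v *)
From mathcomp Require Import all_boot all_order all_algebra.
Set Implicit Arguments.
Unset Strict Implicit.
Unset Printing Implicit Defensive.
Import GRing.Theory Num.Theory.

(* A hypergraph on a finite vertex set V is given inside an
   ambient finite type T as a pair (V : {set T}, C : {set {set T}}). *)

Section Hyper.
Variable T : finType.

Definition is_hypergraph (V : {set T}) (C : {set {set T}}) : Prop :=
  (forall F, F \in C -> F \subset V) /\
  (forall F, F \in C -> 2 <= #|F|) /\
  (forall F G, F \in C -> G \in C -> F \subset G -> F = G).

Definition Ind (V : {set T}) (C : {set {set T}}) : pred {set T} :=
  fun s => (s \subset V) && [forall E in C, ~~ (E \subset s)].

(* ---------- extended naturals  N u {oo} : None = oo ---------- *)
Definition emax (a b : option nat) : option nat :=
  match a, b with Some x, Some y => Some (maxn x y) | _, _ => None end.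
Definition emin (a b : option nat) : option nat :=
  match a, b with
  | Some x, Some y => Some (minn x y)
  | Some x, None => Some x
  | None, Some y => Some y
  | None, None => None end.
Definition eaddn (a : option nat) (k : nat) : option nat :=
  match a with Some x => Some (x + k) | None => None end.

Definition hdel (C : {set {set T}}) (F : {set T}) : {set {set T}} := C :\ F.
Definition hnbr (C : {set {set T}}) (F : {set T}) : {set T} :=
  \bigcup_(E in C | #|E :\: F| == 1) (E :\: F).
Definition hcolonV (V : {set T}) (C : {set {set T}}) (F : {set T}) : {set T} :=
  V :\: (F :|: hnbr C F).
Definition hcolonE (C : {set {set T}}) (F : {set T}) : {set {set T}} :=
  let S := [set E :\: F | E in C :\ F] in
  [set s in S | [forall s' in S, (s' \subset s) ==> (s' == s)] && (2 <= #|s|)].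

(* psi, computed with fuel; fuel #|V| + #|C| + 1 suffices since both recursive
   calls strictly decrease #|V| + #|C|. *)
Fixpoint psi_fuel (n : nat) (V : {set T}) (C : {set {set T}}) : option nat :=
  match n with
  | 0 => Some 0
  | n'.+1 =>
    if V == set0 then Some 0
    else if C == set0 then None
    else \big[emax/Some 0]_(F in C)
           emin (psi_fuel n' V (hdel C F))
                (eaddn (psi_fuel n' (hcolonV V C F) (hcolonE C F)) (#|F| - 1))
  end.

Definition psi (V : {set T}) (C : {set {set T}}) : option nat :=
  psi_fuel (#|V| + #|C|).+1 V C.

(* ---------- reduced simplicial homology with Z coefficients ----------
   A complex is a predicate on {set T} (its faces, including the empty face).
   Orientation: vertices ordered by enum_rank.  Chains are integer functions
   on {set T}; a k-vertex chain of D is supported on faces of D of size k.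
   The augmented boundary (empty face in degree -1) is
     (bd c) tau = sum_{v notin tau} sign(v, v |: tau) * c (v |: tau). *)
Definition bsign (v : T) (s : {set T}) : int :=
  (-1) ^+ #|[set u in s | enum_rank u < enum_rank v]|.

Definition bd (c : {ffun {set T} -> int}) (tau : {set T}) : int :=
  \sum_(v | v \notin tau) bsign v (v |: tau) * c (v |: tau).

Definition chain_on (D : pred {set T}) (k : nat) (c : {ffun {set T} -> int}) : Prop :=
  forall s, c s != 0 -> D s /\ #|s| = k.

(* \tilde H_{k-1}(D; Z) = 0 *)
Definition rhom_vanish_size (D : pred {set T}) (k : nat) : Prop :=
  forall c, chain_on D k c -> (forall tau, bd c tau = 0) ->
  exists d, chain_on D k.+1 d /\ (forall s, bd d s = c s).

Definition rhom_vanish (D : pred {set T}) (i : int) : Prop :=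
  if (i < -1)%R then True else rhom_vanish_size D `|(i + 1)%R|%N.

(* conn_h(D) >= m, with m = None meaning m = oo *)
Definition conn_h_ge (D : pred {set T}) (m : option int) : Prop :=
  forall i : int, (match m with Some m => (i <= m)%R | None => true end) ->
  rhom_vanish D i.

End Hyper.

(* Main.v *)
Require Import Defs.
From mathcomp Require Import all_boot all_order all_algebra.
From mathcomp Require Import ring zify.
Set Implicit Arguments.
Unset Strict Implicit.
Unset Printing Implicit Defensive.
Import Order.TTheory GRing.Theory Num.Theory.

Section Signs.
Variable T : finType.
Implicit Types (s t F : {set T}) (u v w x : T).
Local Open Scope ring_scope.

Lemma bsign_sq v s : bsign v s * bsign v s = 1.
Proof. by rewrite /bsign -exprD -signr_odd oddD addbb. Qed.

Lemma bsignU v s t : [disjoint s & t] -> bsign v (s :|: t) = bsign v s * bsign v t.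
Proof.
move=> dis; rewrite /bsign -exprD; congr (_ ^+ _).
have -> : [set u in s :|: t | enum_rank u < enum_rank v]%N =
  [set u in s | enum_rank u < enum_rank v]%N :|: [set u in t | enum_rank u < enum_rank v]%N.
  by apply/setP=> u; rewrite !inE andb_orl.
rewrite cardsU; have -> : [set u in s | enum_rank u < enum_rank v]%N :&:
   [set u in t | enum_rank u < enum_rank v]%N = set0.
  apply/setP=> u; rewrite !inE; apply/negbTE; apply/negP=> /andP[/andP[us _] /andP[ut _]].
  by rewrite (disjointFr dis us) in ut.
by rewrite cards0 subn0.
Qed.

Lemma bsign1 v w : bsign v [set w] = (-1) ^+ (enum_rank w < enum_rank v)%N.
Proof.
rewrite /bsign; congr (_ ^+ _).
case: ltnP => h.
  by rewrite (_ : [set _ in _ | _] = [set w]) ?cards1 //; apply/setP=> u; rewrite !inE;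
     case: eqP => // ->.
by apply/eqP; rewrite cards_eq0; apply/eqP/setP=> u; rewrite !inE;
   case: eqP => // ->; rewrite ltnNge h.
Qed.

Lemma bsignU1 v w s : w \notin s -> bsign v (w |: s) = bsign v [set w] * bsign v s.
Proof. by move=> ws; rewrite bsignU // disjoints1. Qed.

Lemma bsign_self v s : v \notin s -> bsign v (v |: s) = bsign v s.
Proof. by move=> vs; rewrite bsignU1 // bsign1 ltnn mul1r. Qed.

Lemma bsign_swap v w : v != w -> bsign v [set w] * bsign w [set v] = -1.
Proof.
move=> vw; rewrite !bsign1 -exprD.
have : enum_rank v != enum_rank w by apply: contra vw => /eqP/enum_rank_inj ->.
case: (ltngtP (enum_rank v) (enum_rank w)) => [h|h|h] hn.
- by rewrite expr1.
- by rewrite expr1.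
- by move: hn; rewrite (val_inj h) eqxx.
Qed.

Definition bdf (x : {ffun {set T} -> int}) : {ffun {set T} -> int} := [ffun s => bd x s].

Lemma bdbd (c : {ffun {set T} -> int}) t : bd (bdf c) t = 0.
Proof.
rewrite /bd.
pose f v w := if (v \notin t) && (w \notin t) && (w != v) then
   bsign v (v |: t) * bsign w (w |: (v |: t)) * c (w |: (v |: t)) else 0.
have -> : \sum_(v | v \notin t) bsign v (v |: t) * bdf c (v |: t) = \sum_v \sum_w f v w.
  rewrite big_mkcond; apply: eq_bigr => v _; rewrite /f ffunE /bd.
  case vt: (v \notin t) => /=; last by rewrite big1.
  rewrite mulr_sumr big_mkcond; apply: eq_bigr => w _; rewrite !inE negb_or.
  by case: (w \notin t); case: (w != v); rewrite /= ?mulr0 // mulrA.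
have fA : forall v w, f w v = - f v w.
  move=> v w; rewrite /f.
  case vt: (v \notin t); case wt: (w \notin t); rewrite /= ?oppr0 //.
  case: (eqVneq v w) => [->|vw]; first by rewrite ?eqxx ?oppr0.
  rewrite /=.
  have vwt : v \notin w |: t by rewrite !inE negb_or vw vt.
  have wvt : w \notin v |: t by rewrite !inE negb_or eq_sym vw wt.
  rewrite (bsign_self vwt) (bsign_self wvt) (bsign_self vt) (bsign_self wt).
  rewrite (bsignU1 _ wt) (bsignU1 _ vt) setUCA.
  have hab := bsign_swap vw.
  have -> : bsign v [set w] = - bsign w [set v].
    by rewrite -[LHS]mulr1 -(bsign_sq w [set v]) mulrA hab mulN1r.
  ring.
have S0 : \sum_v \sum_w f v w = - \sum_v \sum_w f v w.
  rewrite [LHS]exchange_big /= -sumrN; apply: eq_bigr => v _.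
  rewrite -sumrN; apply: eq_bigr => w _; exact: fA.
move: S0; set S := \sum_v _; lia.
Qed.


Definition delta F t : int := \prod_(w in t) bsign w F.

Lemma deltaU1 F v t : v \notin t -> delta F (v |: t) = bsign v F * delta F t.
Proof. by move=> vt; rewrite /delta big_setU1. Qed.

Lemma delta_sq F t : delta F t * delta F t = 1.
Proof. by rewrite /delta -big_split /= big1 // => w _; rewrite bsign_sq. Qed.

Lemma disjU1 F t v : v \notin F -> [disjoint F & t] -> [disjoint F & v |: t].
Proof.
move=> vF d; rewrite -setI_eq0; apply/eqP/setP=> u; rewrite !inE.
case: (eqVneq u v) => [->|_]; rewrite ?(negbTE vF) //=.
by case uF: (u \in F); rewrite //= (disjointFr d uF).
Qed.

Lemma sign_key F t v : v \notin F -> v \notin t -> [disjoint F & t] ->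
  bsign v (v |: (F :|: t)) = bsign v F * bsign v (v |: t).
Proof. by move=> vF vt d; rewrite setUCA bsignU // disjU1. Qed.

Definition down F (c : {ffun {set T} -> int}) : {ffun {set T} -> int} :=
  [ffun t : {set T} => if [disjoint t & F] then delta F t * c (F :|: t) else 0].

Definition up F (c : {ffun {set T} -> int}) : {ffun {set T} -> int} :=
  [ffun s : {set T} => if F \subset s then delta F (s :\: F) * c (s :\: F) else 0].

Lemma bd_down F (c : {ffun {set T} -> int}) t : [disjoint t & F] -> bd (down F c) t = delta F t * bd c (F :|: t).
Proof.
move=> d; rewrite /bd mulr_sumr [LHS]big_mkcond [RHS]big_mkcond; apply: eq_bigr => v _.
rewrite ffunE !inE negb_or.
case vt: (v \in t) => /=; first by rewrite andbF.
case vF: (v \in F) => /=.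
  rewrite ifF ?mulr0 //; apply/negP=> /disjointFr/(_ (setU11 v t)); by rewrite vF.
have dF : [disjoint F & t] by rewrite disjoint_sym.
have d' : [disjoint v |: t & F] by rewrite disjoint_sym disjU1 ?vF.
rewrite d' sign_key ?vF ?vt // deltaU1 ?vt // setUCA; ring.
Qed.

Lemma bd_up F (c : {ffun {set T} -> int}) t : [disjoint t & F] -> (forall s, ~~ [disjoint s & F] -> c s = 0) ->
  bd (up F c) (F :|: t) = delta F t * bd c t.
Proof.
move=> d c0; rewrite /bd mulr_sumr [LHS]big_mkcond [RHS]big_mkcond; apply: eq_bigr => v _.
rewrite ffunE !inE negb_or.
case vt: (v \in t) => /=; first by rewrite andbF.
case vF: (v \in F) => /=.
  rewrite c0 ?mulr0 // disjoint_sym; apply/negP => /disjointFr/(_ vF).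
  by rewrite !inE eqxx.
rewrite ifT; last exact: (subset_trans (subsetUl F t) (subsetU1 v _)).
have -> : (v |: (F :|: t)) :\: F = v |: t.
  apply/setP=> u; rewrite !inE; case: (eqVneq u v) => [->|_]; rewrite ?vF //=.
  by case uF: (u \in F) => //=; rewrite (disjointFl d uF).
have dF : [disjoint F & t] by rewrite disjoint_sym.
rewrite sign_key ?vF ?vt // deltaU1 ?vt //; rewrite -[RHS]mul1r -(bsign_sq v F); ring.
Qed.

End Signs.
Section Cone.
Variable T : finType.
Local Open Scope ring_scope.

Definition cone (x : T) (c : {ffun {set T} -> int}) : {ffun {set T} -> int} :=
  [ffun s : {set T} => if x \in s then bsign x s * c (s :\ x) else 0].

Lemma bd_cone x (c : {ffun {set T} -> int}) : (forall t, bd c t = 0) ->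
  forall t, bd (cone x c) t = c t.
Proof.
move=> cyc t; case xt: (x \in t); last first.
  rewrite /bd (bigD1 x) ?xt //= big1 ?addr0; last first.
    move=> v /andP[vt vx]; rewrite ffunE !inE eq_sym (negbTE vx) xt /= mulr0 //.
  rewrite ffunE setU11 setU1K ?xt // mulrA bsign_sq mul1r //.
have [t' xt' ->] : exists2 t' : {set T}, x \notin t' & t = x |: t'.
  by exists (t :\ x); [rewrite setD11 | rewrite setD1K].
set S := \sum_(v | v \notin x |: t') bsign v t' * c (v |: t').
have h1 : bd (cone x c) (x |: t') = - bsign x t' * S.
  rewrite /bd /S mulr_sumr; apply: eq_bigr => v vt.
  have vx : v != x by apply: contraNneq vt => ->; rewrite setU11.
  have vt' : v \notin t' by move: vt; rewrite !inE negb_or => /andP[].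
  rewrite ffunE !inE eqxx orbT.
  have -> : (v |: (x |: t')) :\ x = v |: t'.
    apply/setP=> u; rewrite !inE; case: (eqVneq u x) => [->|//].
    by rewrite eq_sym (negbTE vx) (negbTE xt').
  rewrite (bsign_self vt) (bsignU1 _ vt) (bsignU1 v xt').
  rewrite (bsign_self xt').
  have -> : bsign v [set x] = - bsign x [set v].
    by rewrite -[LHS]mulr1 -(bsign_sq x [set v]) mulrA (bsign_swap vx) mulN1r.
  rewrite -[RHS]mul1r -(bsign_sq x [set v]); ring.
have h2 : bd c t' = bsign x t' * c (x |: t') + S.
  rewrite /bd (bigD1 x) //= (bsign_self xt'); congr (_ + _).
  apply: eq_big => [v|v /andP[vt _]]; first by rewrite !inE negb_or andbC.
  by rewrite bsign_self.
have hS : S = - (bsign x t' * c (x |: t')).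
  by apply/eqP; rewrite -addr_eq0 addrC -h2 cyc.
rewrite h1 hS.
by rewrite mulNr mulrN opprK mulrA bsign_sq mul1r.
Qed.

End Cone.
Section Cone2.
Variable T : finType.
Local Open Scope ring_scope.

Lemma cone_vanish (D : pred {set T}) x k :
  (forall s, D s -> D (x |: s)) -> rhom_vanish_size D k.
Proof.
move=> Dx c cc cyc; exists (cone x c); split; last exact: bd_cone.
move=> s; rewrite ffunE; case: ifP => xs; last by rewrite eqxx.
move=> nz; have nz' : c (s :\ x) != 0 by apply: contraNneq nz => ->; rewrite mulr0.
have [Ds ks] := cc _ nz'; split; first by rewrite -(setD1K xs); apply: Dx.
by rewrite (cardsD1 x) xs ks.
Qed.

Lemma card_disjU (A B : {set T}) : [disjoint A & B] -> #|A :|: B| = (#|A| + #|B|)%N.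
Proof. by move=> d; rewrite cardsU (disjoint_setI0 d) cards0 subn0. Qed.

Lemma bd_sub (a b : {ffun {set T} -> int}) t :
  bd [ffun s => a s - b s] t = bd a t - bd b t.
Proof. by rewrite /bd -sumrB; apply: eq_bigr => v _; rewrite ffunE mulrBr. Qed.

Lemma bd_nz (a : {ffun {set T} -> int}) t : bd a t != 0 -> exists2 v, v \notin t & a (v |: t) != 0.
Proof.
move=> nz; apply/exists_inP; apply: contraNT nz; rewrite negb_exists_in => /forall_inP h.
by apply/eqP/big1 => v /h /negPn/eqP ->; rewrite mulr0.
Qed.

Lemma key_abstract (D0 D1 D2 : pred {set T}) (F : {set T}) (k : nat) :
 (forall s, D0 s -> D1 s) ->
 (forall s, D1 s -> ~~ (F \subset s) -> D0 s) ->
 (forall s, D0 s -> ~~ (F \subset s)) ->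
 (forall s t : {set T}, D1 s -> t \subset s -> D1 t) ->
 (forall t : {set T}, [disjoint t & F] -> D1 (F :|: t) -> D2 t) ->
 (forall t : {set T}, D2 t -> [disjoint t & F] /\ D1 (F :|: t)) ->
 rhom_vanish_size D1 k -> ((#|F| <= k.+1)%N -> rhom_vanish_size D2 (k.+1 - #|F|)) ->
 rhom_vanish_size D0 k.
Proof.
move=> D01 D10 D0F D1sub D12 D21 van1 van2 c cc cyc.
have cc1 : chain_on D1 k c by move=> s /cc [/D01 ? ?].
have [d [dd bdd]] := van1 c cc1 cyc.
case: (leqP #|F| k.+1) => hF; last first.
  exists d; split => // s /dd [D1s ks]; split => //; apply: D10 => //.
  by apply/negP => /subset_leq_card; rewrite ks leqNgt hF.
have ch : chain_on D2 (k.+1 - #|F|) (down F d).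
  move=> t; rewrite ffunE; case: ifP => dis; last by rewrite eqxx.
  move=> nz; have nz' : d (F :|: t) != 0 by apply: contraNneq nz => ->; rewrite mulr0.
  have [D1s ks] := dd _ nz'; split; first exact: D12.
  by move: ks; rewrite card_disjU 1?disjoint_sym // => <-; rewrite addKn.
have cy : forall t, bd (down F d) t = 0.
  move=> t; case: (boolP [disjoint t & F]) => dis.
    rewrite bd_down // bdd; case: (eqVneq (c (F :|: t)) 0) => [->|/cc [/D0F]]; first by rewrite mulr0.
    by rewrite subsetUl.
  rewrite /bd big1 // => v _; rewrite ffunE ifF ?mulr0 //; apply/negP => dv.
  move/negP: dis; apply; apply: disjointWl dv; exact: subsetU1.
have [g [gg bdg]] := van2 hF _ ch cy.
pose g' := up F g.
have g0 : forall s : {set T}, ~~ [disjoint s & F] -> g s = 0.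
  move=> s ns; apply/eqP; apply: contraNT ns => /gg [/D21 [] //].
exists [ffun s => d s - bdf g' s]; split; last first.
  by move=> s; rewrite bd_sub bdd bdbd subr0.
move=> s; rewrite ffunE; case: (boolP (F \subset s)) => Fs.
  have dis : [disjoint s :\: F & F].
    by rewrite -setI_eq0; apply/eqP/setP=> u; rewrite !inE; case: (u \in F); rewrite ?andbF.
  have sE : s = F :|: (s :\: F).
    by apply/setP=> u; rewrite !inE; case uF: (u \in F) => //=; rewrite (subsetP Fs).
  rewrite ffunE /g'.
  have -> : bd (up F g) s = d s.
    by rewrite {1}sE bd_up // bdg ffunE dis mulrA delta_sq mul1r -sE.
  by rewrite subrr eqxx.
move=> nz.
have [nzd|zd] := boolP (d s != 0).
  by have [D1s ks] := dd _ nzd; split => //; apply: D10.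
move/negPn/eqP: zd nz => ->; rewrite ffunE sub0r oppr_eq0 => /bd_nz [v vs].
rewrite ffunE; case: ifP => Fv; last by rewrite eqxx.
move=> nz; have nz' : g ((v |: s) :\: F) != 0 by apply: contraNneq nz => ->; rewrite mulr0.
have [/D21 [dis D1u] ku] := gg _ nz'.
have vsE : F :|: (v |: s) :\: F = v |: s.
  by apply/setP=> u; rewrite !inE; case uF: (u \in F) => //=; move/subsetP: Fv => /(_ u uF); rewrite !inE.
rewrite vsE in D1u; split.
  by apply: D10 => //; apply: D1sub D1u _; exact: subsetU1.
have hc : #|F :|: (v |: s) :\: F| = (#|F| + #|(v |: s) :\: F|)%N.
  by apply: card_disjU; rewrite disjoint_sym.
rewrite vsE ku cardsU1 vs /= in hc; lia.
Qed.
End Cone2.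
Section Hyp.
Variable T : finType.
Implicit Types (V F E s t : {set T}) (C : {set {set T}}).

Lemma IndP V C s :
  reflect (s \subset V /\ forall E, E \in C -> ~~ (E \subset s)) (Ind V C s).
Proof.
rewrite /Ind; apply: (iffP andP) => [[a /forall_inP b]|[a b]]; split => //.
by apply/forall_inP.
Qed.

Lemma nbrP C F u :
  reflect (exists2 E, E \in C & E :\: F = [set u]) (u \in hnbr C F).
Proof.
rewrite /hnbr; apply: (iffP bigcupP) => [[E /andP[EC /cards1P[w Ew]] uE]|[E EC Eu]].
  by exists E => //; move: uE; rewrite Ew inE => /eqP ->.
by exists E; [rewrite EC Eu cards1 | rewrite Eu set11].
Qed.

Definition Sset C F := [set E :\: F | E in C :\ F].

Lemma colonP C F s : reflect
  [/\ s \in Sset C F, (forall s', s' \in Sset C F -> s' \subset s -> s' = s) & (2 <= #|s|)%N]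
  (s \in hcolonE C F).
Proof.
rewrite /hcolonE inE; apply: (iffP andP) => [[sS /andP[/forall_inP m c2]]|[sS m c2]].
  by split => // s' /m /implyP h /h /eqP.
split => //; apply/andP; split => //; apply/forall_inP => s' /m h; apply/implyP => /h ->.
by rewrite eqxx.
Qed.

Variables (V : {set T}) (C : {set {set T}}) (F : {set T}).
Hypothesis H : is_hypergraph V C.
Hypothesis FC : F \in C.

Lemma notE_sub_F E : E \in C :\ F -> E :\: F != set0.
Proof.
case: H => _ [_ anti]; rewrite !inE => /andP[EF EC]; apply: contra EF => /eqP h.
apply/eqP/anti => //; apply/subsetP => u uE; apply/negPn/negP => uF.
have : u \in E :\: F by rewrite inE uF uE.
by rewrite h inE.
Qed.


Lemma D12 t : [disjoint t & F] -> Ind V (C :\ F) (F :|: t) ->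
  Ind (hcolonV V C F) (hcolonE C F) t.
Proof.
move=> dis /IndP [sV noE]; apply/IndP; split.
- apply/subsetP => u ut; rewrite /hcolonV !inE negb_or.
  have uV : u \in V by apply: (subsetP sV); rewrite inE ut orbT.
  rewrite uV andbT (disjointFr dis ut) /=.
  apply/nbrP => -[E EC Eu].
  have EF : E \in C :\ F.
    rewrite !inE EC andbT; apply/eqP => EF.
    by move: Eu; rewrite EF setDv => /setP/(_ u); rewrite !inE eqxx.
  move: (noE E EF) => /negP; apply; apply/subsetP => x xE; rewrite inE.
  case xF: (x \in F) => //=.
  have : x \in E :\: F by rewrite inE xF xE.
  by rewrite Eu inE => /eqP ->.
- move=> s /colonP [/imsetP [E EF ->] _ _]; apply: contra (noE E EF) => sub.
  apply/subsetP => x xE; rewrite inE; case xF: (x \in F) => //=.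
  by apply: (subsetP sub); rewrite inE xF xE.
Qed.

Lemma D21 t : Ind (hcolonV V C F) (hcolonE C F) t ->
  [disjoint t & F] /\ Ind V (C :\ F) (F :|: t).
Proof.
move=> /IndP [tV noE].
have tV' : forall u, u \in t -> [/\ u \in V, u \notin F & u \notin hnbr C F].
  move=> u /(subsetP tV); rewrite /hcolonV !inE negb_or => /andP[/andP[a b] c].
  by split.
split.
  rewrite -setI_eq0; apply/eqP/setP => u; rewrite !inE; case ut: (u \in t) => //=.
  by case: (tV' u ut) => _ /negbTE.
apply/IndP; split.
  apply/subsetP => u; rewrite inE => /orP [uF|ut].
    by case: H => /(_ F FC) /subsetP /(_ u uF).
  by case: (tV' u ut).
move=> E EF; apply/negP => Esub.
have EFt : E :\: F \subset t.
  apply/subsetP => u; rewrite inE => /andP[uF uE]; move: (subsetP Esub u uE).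
  by rewrite inE (negbTE uF).
have ES : E :\: F \in Sset C F by apply: imset_f.
have [A /minsetP [AS Amin] AE] := minset_exists (P := fun A => A \in Sset C F) ES.
move: (AS) => /imsetP [E2 E2F AE2].
have At : A \subset t := subset_trans AE EFt.
case: (ltnP 1 #|A|) => cA.
  have : A \in hcolonE C F by apply/colonP; split => // s' s'S s'A; apply: Amin.
  by move/noE; rewrite At.
have : A != set0 by rewrite AE2 notE_sub_F.
rewrite -card_gt0 => cA0.
have /cards1P [u Au] : #|A| == 1 by rewrite eqn_leq cA cA0.
have ut : u \in t by apply: (subsetP At); rewrite Au set11.
case: (tV' u ut) => _ _ /nbrP; apply; exists E2; last by rewrite -AE2.
by move: E2F; rewrite inE => /andP[].
Qed.

Lemma hyp_del : is_hypergraph V (C :\ F).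
Proof.
case: H => a [b c]; split; [|split].
- by move=> E; rewrite inE => /andP[_ /a].
- by move=> E; rewrite inE => /andP[_ /b].
- by move=> E G; rewrite !inE => /andP[_ EC] /andP[_ GC]; apply: c.
Qed.

Lemma hyp_colon : is_hypergraph (hcolonV V C F) (hcolonE C F).
Proof.
case: H => HV [H2 Hanti]; split.
- move=> s /colonP [/imsetP [E EF ->] smin c2].
  apply/subsetP => u; rewrite inE => /andP [uF uE].
  have EC : E \in C by move: EF; rewrite inE => /andP[].
  rewrite /hcolonV !inE negb_or uF (subsetP (HV E EC) u uE) andbT /=.
  apply/nbrP => -[E' E'C E'u].
  have E'F : E' \in C :\ F.
    rewrite !inE E'C andbT; apply/eqP => e.
    by move: E'u; rewrite e setDv => /setP /(_ u); rewrite !inE eqxx.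
  have := smin (E' :\: F) (imset_f _ E'F).
  rewrite E'u sub1set inE uF uE => /(_ isT) e.
  by move: c2; rewrite -e cards1.
- split; first by move=> s /colonP [].
  by move=> s s' /colonP [sS _ _] /colonP [_ m _] ss'; exact: m.
Qed.

Lemma card_colonV : (#|hcolonV V C F| <= #|V|)%N.
Proof. exact/subset_leq_card/subsetDl. Qed.

Lemma card_colonE : (#|hcolonE C F| <= #|C :\ F|)%N.
Proof.
apply: leq_trans (leq_imset_card (fun E => E :\: F) _).
by apply: subset_leq_card; apply/subsetP => s /colonP [].
Qed.

Lemma key V0 k : V0 = V ->
  rhom_vanish_size (Ind V (C :\ F)) k ->
  ((#|F| <= k.+1)%N -> rhom_vanish_size (Ind (hcolonV V C F) (hcolonE C F)) (k.+1 - #|F|)) ->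
  rhom_vanish_size (Ind V0 C) k.
Proof.
move=> -> van1 van2.
apply: (key_abstract (D2 := Ind (hcolonV V C F) (hcolonE C F)) (F := F)) van1 van2.
- move=> s /IndP [a b]; apply/IndP; split => // E; rewrite inE => /andP[_]; exact: b.
- move=> s /IndP [a b] nF; apply/IndP; split => // E EC.
  case: (eqVneq E F) => [-> //|EF]; apply: b; by rewrite !inE EF.
- by move=> s /IndP [_ b]; apply: b.
- move=> s t /IndP [a b] ts; apply/IndP; split; first exact: subset_trans ts a.
  move=> E /b; apply: contra => Et; exact: subset_trans Et ts.
- exact: D12.
- exact: D21.
Qed.

End Hyp.
Definition le_opt (a : nat) (o : option nat) : Prop :=
  match o with Some p => (a <= p)%N | None => True end.

Lemma le_opt_emin a x y : le_opt a (emin x y) -> le_opt a x /\ le_opt a y.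
Proof. by case: x y => [x|] [y|] //=; rewrite leq_min => /andP[]. Qed.

Lemma le_opt_bigmax (I : finType) (P : pred I) (f : I -> option nat) a : (0 < a)%N ->
  le_opt a (\big[emax/Some 0]_(i | P i) f i) -> exists2 i, P i & le_opt a (f i).
Proof.
move=> a0; apply: (big_rec (fun x => le_opt a x -> exists2 i, P i & le_opt a (f i))).
  by rewrite /= leqNgt a0.
move=> i x Pi IH; case fi: (f i) => [p|]; last by exists i; rewrite ?fi.
case: x IH => [q|] IH /=; last by apply: IH.
rewrite leq_max => /orP[h|h]; last exact: IH.
by exists i; rewrite ?fi.
Qed.

Section Main.
Variable T : finType.

Lemma main n : forall (V : {set T}) (C : {set {set T}}), is_hypergraph V C ->
  (#|V| + #|C| < n)%N -> forall k, le_opt k.+1 (psi_fuel n V C) ->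
  rhom_vanish_size (Ind V C) k.
Proof.
elim: n => [|n IH] V C H hs k //=.
case: ifP => V0; first by [].
case: ifP => C0.
  move=> _; have [x xV] : exists x, x \in V by apply/set0Pn; rewrite V0.
  move/eqP: C0 => ->; apply: (cone_vanish (x := x)) => s /IndP [sV _].
  apply/IndP; split; last by move=> E; rewrite inE.
  by rewrite subUset sub1set xV sV.
move/le_opt_bigmax => /(_ isT) [F FC] /le_opt_emin [h1 h2].
have cC := cardsD1 F C; rewrite FC add1n in cC.
apply: (key H FC (erefl V)).
  by apply: (IH V (C :\ F) (hyp_del F H) _ k h1); rewrite -ltnS -addnS -cC.
move=> hF; apply: IH; first exact: hyp_colon.
  apply: leq_ltn_trans (leq_add (card_colonV V C F) (card_colonE C F)) _.
  by rewrite -ltnS -addnS -cC.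
have F2 : (2 <= #|F|)%N by case: H => _ [/(_ F FC)].
by move: h2; case: (psi_fuel n _ _) => [q|] //=; lia.
Qed.

End Main.

Theorem corollary3p3 (T : finType) (V : {set T}) (C : {set {set T}}) :
  is_hypergraph V C ->
  conn_h_ge (Ind V C) (omap (fun p : nat => (p%:Z - 2)%R) (psi V C)).
Proof.
move=> H i hi; rewrite /rhom_vanish; case: ifP => // hi1.
apply: (main (n := (#|V| + #|C|).+1)) => //.
move: hi; rewrite /psi; case: psi_fuel => [p|] //= hp.
move/negbT: hi1; move: hp; lia.
Qed.
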